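(* For every $k\ge 0$ let $a(k)$ be the exponent of the largest power of $2$ dividing $k!$. For every $n\ge1$, let $f(n)$ be the minimum of $\Phi(T)$ over all binary phylogenetic trees $T$ with $n$ leaves. Then for every $n\ge 1$, $$f(n)=\sum_{k=0}^{n-1}a(k).$$
   Context: A phylogenetic tree with $n$ leaves is a rooted tree whose leaves are bijectively labeled by $\{1,\dots,n\}$; binary means every internal node has exactly two children. The depth $\delta_T(v)$ is the number of arcs from the root to $v$; for leaves $i,j$, $\varphi_T(i,j)=\delta_T(LCA_T(i,j))$ ($LCA$ = lowest common ancestor), and $\Phi(T)=\sum_{1\le i<j\le n}\varphi_T(i,j)$ is the total cophenetic index. *)

(* Defs.v *)
From mathcomp Require Import all_boot.
Set Implicit Arguments. Unset Strict Implicit. Unset Printing Implicit Defensive.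

Inductive btree : Type :=
| Leaf of nat
| Node of btree & btree.

Fixpoint leaves (t : btree) : seq nat :=
  match t with
  | Leaf i => [:: i]
  | Node l r => leaves l ++ leaves r
  end.

Definition phylo (n : nat) (t : btree) : Prop :=
  perm_eq (leaves t) (iota 1 n).

Fixpoint lca_depth (t : btree) (i j : nat) : nat :=
  match t with
  | Leaf _ => 0
  | Node l r =>
      if (i \in leaves l) && (j \in leaves l) then (lca_depth l i j).+1
      else if (i \in leaves r) && (j \in leaves r) then (lca_depth r i j).+1
      else 0
  end.

Definition Phi (n : nat) (t : btree) : nat :=
  \sum_(1 <= i < n.+1) \sum_(i.+1 <= j < n.+1) lca_depth t i j.

Definition a (k : nat) : nat := logn 2 k`!.

(* Main.v *)
Require Import Defs.
From mathcomp Require Import all_boot.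
From mathcomp Require Import zify.

Fixpoint g (t : btree) : nat :=
  match t with
  | Leaf _ => 0
  | Node l r => g l + g r + 'C(size (leaves l), 2) + 'C(size (leaves r), 2)
  end.

Definition S n := \sum_(k < n) a k.
Definition T n := S n + 'C(n, 2).

Lemma S_succ n : S n.+1 = S n + a n.
Proof. by rewrite /S big_ord_recr. Qed.

Lemma T_succ n : T n.+1 = T n + a n + n.
Proof. rewrite /T S_succ binS bin1; lia. Qed.

Lemma a_succ n : a n.+1 = logn 2 n.+1 + a n.
Proof. by rewrite /a factS lognM // fact_gt0. Qed.

Lemma a_odd m : a (m.*2.+1) = a (m.*2).
Proof.
rewrite /a factS logn_Gauss // coprime2n /= odd_double //.
Qed.

Lemma a_even m : a (m.*2) = m + a m.
Proof.
elim: m => [|m IH]; first by [].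
have E : (m.+1).*2 = (m.*2).+2 by rewrite doubleS.
rewrite {1}E a_succ a_odd IH [a m.+1]a_succ -E -mul2n.
rewrite lognM // (@logn_prime 2 2) //=. lia.
Qed.

Lemma a_mono m n : m <= n -> a m <= a n.
Proof.
elim: n => [|n IH]; first by rewrite leqn0 => /eqP->.
rewrite leq_eqVlt => /orP[/eqP->//|]; rewrite ltnS => /IH.
rewrite a_succ; lia.
Qed.

Lemma S_even m : S (m.*2) = T m + T m.
Proof.
elim: m => [|m IH]; first by rewrite /T /S big_ord0.
by rewrite doubleS !S_succ a_odd a_even IH T_succ; lia.
Qed.

Lemma S_odd m : S (m.*2.+1) = T m + T m.+1.
Proof. by rewrite S_succ S_even a_even T_succ; lia. Qed.

Lemma exch x y : x <= y -> T x.+1 + T y <= T x + T y.+1.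
Proof. move=> h; have := @a_mono x y h; rewrite !T_succ; lia. Qed.

Lemma lowerT n1 n2 : S (n1 + n2) <= T n1 + T n2.
Proof.
suff H : forall d, (forall x, S (x + (x + d)) <= T x + T (x + d)) /\
                   (forall x, S (x + (x + d.+1)) <= T x + T (x + d.+1)).
  wlog le: n1 n2 / n1 <= n2.
    move=> W; case: (leqP n1 n2) => h; first exact: W.
    by rewrite addnC [T n1 + _]addnC; apply: W; apply: ltnW.
  have -> : n2 = n1 + (n2 - n1) by lia.
  exact: (H _).1.
elim=> [|d [IH1 IH2]].
  split=> x; first by rewrite addn0 addnn S_even.
  by rewrite addn1 addnS addnn S_odd.
split; first exact: IH2.
move=> x.
have := @exch x (x + d.+1) (leq_addr d.+1 x).
have := IH1 x.+1.
have -> : x + (x + d.+2) = x.+1 + (x.+1 + d) by lia.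
have -> : (x + d.+1).+1 = x + d.+2 by lia.
have -> : x.+1 + d = x + d.+1 by lia.
lia.
Qed.

Lemma g_lower t : S (size (leaves t)) <= g t.
Proof.
elim: t => [i|l IHl r IHr] /=; first by rewrite /S big_ord1.
rewrite size_cat; apply: leq_trans (lowerT _ _) _.
rewrite /T; lia.
Qed.

Lemma count_lt_gt (x : nat) s : x \notin s ->
  count (fun j => x < j) s + count (fun j => j < x) s = size s.
Proof.
elim: s => [|y s IH] //; rewrite in_cons negb_or => /andP[ne /IH].
rewrite /= -/(count _ s) => E.
by case: (ltngtP x y) ne => h; rewrite ?h ?eqxx //= => _; lia.
Qed.

Lemma pairs_count (s : seq nat) : uniq s ->
  \sum_(i <- s) \sum_(j <- s | i < j) 1 = 'C(size s, 2).
Proof.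
elim: s => [|x s IH] /=; first by rewrite big_nil.
case/andP=> nx us.
rewrite big_cons big_cons ltnn sum1_count.
have -> : \sum_(i <- s) \sum_(j <- x :: s | i < j) 1 =
          \sum_(i <- s) ((i < x) + \sum_(j <- s | i < j) 1).
  by apply: eq_bigr => i _; rewrite big_cons; case: (i < x).
rewrite big_split /= IH // -big_mkcond /= sum1_count addnA count_lt_gt //.
by rewrite binS bin1 addnC.
Qed.

Definition W (t : btree) :=
  \sum_(i <- leaves t) \sum_(j <- leaves t | i < j) lca_depth t i j.

Lemma W_g t : uniq (leaves t) -> W t = g t.
Proof.
rewrite /W; elim: t => [x|l IHl r IHr] /=.
  by rewrite !big_cons big_nil ltnn big_nil.
rewrite cat_uniq => /and3P[ul dis ur].
have dlr : forall i, i \in leaves l -> i \notin leaves r.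
  by move=> i il; apply/negP => ir; move/hasPn: dis => /(_ i ir); rewrite il.
rewrite big_cat /=.
rewrite -(IHl ul) -(IHr ur) -(pairs_count _ ul) -(pairs_count _ ur).
have -> : \sum_(i <- leaves l) \sum_(j <- leaves l ++ leaves r | i < j)
     (if (i \in leaves l) && (j \in leaves l) then (lca_depth l i j).+1
      else if (i \in leaves r) && (j \in leaves r) then (lca_depth r i j).+1 else 0)
  = \sum_(i <- leaves l) \sum_(j <- leaves l | i < j) (lca_depth l i j + 1).
  apply: eq_big_seq => i il; rewrite big_cat /= -[RHS]addn0; congr (_ + _).
    by rewrite big_seq_cond [RHS]big_seq_cond; apply: eq_bigr => j /andP[jl _]; rewrite il jl addn1.
  rewrite big1_seq // => j /andP[_ jr].
  have jl : j \notin leaves l by apply/negP => /dlr; rewrite jr.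
  by rewrite (negbTE jl) andbF (negbTE (dlr _ il)).
have -> : \sum_(i <- leaves r) \sum_(j <- leaves l ++ leaves r | i < j)
     (if (i \in leaves l) && (j \in leaves l) then (lca_depth l i j).+1
      else if (i \in leaves r) && (j \in leaves r) then (lca_depth r i j).+1 else 0)
  = \sum_(i <- leaves r) \sum_(j <- leaves r | i < j) (lca_depth r i j + 1).
  apply: eq_big_seq => i ir.
  have il : i \notin leaves l by apply/negP => /dlr; rewrite ir.
  rewrite big_cat /= (negbTE il) /=; rewrite big1_seq ?add0n.
    by rewrite big_seq_cond [RHS]big_seq_cond; apply: eq_bigr => j /andP[jr _]; rewrite ir jr addn1.
  by move=> j /andP[_ jl]; rewrite (negbTE (dlr _ jl)) andbF.
have E : forall s F, \sum_(i <- s) \sum_(j <- s | i < j) (F i j + 1) =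
   \sum_(i <- s) \sum_(j <- s | i < j) F i j + \sum_(i <- s) \sum_(j <- s | i < j) 1.
  by move=> s F; rewrite -big_split; apply: eq_bigr => i _; rewrite big_split.
rewrite !E; lia.
Qed.

Lemma inner_eq n i (F : nat -> nat) : 1 <= i <= n ->
  \sum_(i.+1 <= j < n.+1) F j = \sum_(j <- iota 1 n | i < j) F j.
Proof.
move=> /andP[i1 iN].
have -> : iota 1 n = index_iota 1 n.+1 by rewrite /index_iota subSS subn0.
rewrite [RHS](@big_cat_nat _ _ _ i.+1) //=.
rewrite [X in _ = X + _]big_nat_cond [X in _ = X + _]big1 ?add0n; last by move=> j /andP[/andP[_ h] h2]; lia.
rewrite [RHS]big_nat_cond [LHS]big_nat_cond; apply: eq_bigl => j.
by apply/idP/idP => /andP[/andP[h1 h2] h3]; rewrite h1 h2 //=; lia.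
Qed.

Lemma Phi_W n t : phylo n t -> Phi n t = W t.
Proof.
move=> p; rewrite /Phi /W (perm_big _ p).
have -> : index_iota 1 n.+1 = iota 1 n by rewrite /index_iota subSS subn0.
apply: eq_big_seq => i; rewrite mem_iota => hi.
rewrite (perm_big _ p) inner_eq //; lia.
Qed.

Fixpoint bal (f lo k : nat) : btree :=
  match f with
  | 0 => Leaf lo
  | f'.+1 => if k <= 1 then Leaf lo
             else Node (bal f' lo k./2) (bal f' (lo + k./2) (k - k./2))
  end.

Lemma half_facts k : k./2.*2 + odd k = k.
Proof. by rewrite addnC odd_double_half. Qed.

Lemma S_half k : S k = T k./2 + T (k - k./2).
Proof.
have := half_facts k; set m := k./2; case: (odd k) => E; rewrite -E.
  have -> : m.*2 + 1 - m = m.+1 by lia.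
  by rewrite addn1 S_odd.
have -> : m.*2 + 0 - m = m by lia.
by rewrite addn0 S_even.
Qed.

Lemma bal_spec f : forall lo k, 0 < k <= f.+1 ->
  leaves (bal f lo k) = iota lo k /\ g (bal f lo k) = S k.
Proof.
elim: f => [|f IH] lo k hk /=.
  have -> : k = 1 by lia.
  by rewrite /S big_ord1.
case: ifP => k1.
  have -> : k = 1 by lia.
  by rewrite /S big_ord1.
have := half_facts k; set m := k./2 => E.
have [h1 h2] : 0 < m <= f.+1 /\ 0 < k - m <= f.+1 by case: (odd k) E; lia.
have [L1 G1] := IH lo m h1; have [L2 G2] := IH (lo + m) (k - m) h2.
rewrite /= L1 L2 G1 G2 -iotaD subnKC; last by case: (odd k) E; lia.
split=> //; rewrite (S_half k) -/m /T !size_iota; lia.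
Qed.

Theorem mainTheorem12 (n : nat) (hn : 1 <= n) :
  (exists t : btree, phylo n t /\ Phi n t = \sum_(k < n) a k) /\
  (forall t : btree, phylo n t -> \sum_(k < n) a k <= Phi n t).
Proof.
split.
  have [L G] := @bal_spec n 1 n (ltac:(by rewrite hn /=)).
  have p : phylo n (bal n 1 n) by rewrite /phylo L.
  exists (bal n 1 n); split=> //.
  rewrite Phi_W // W_g ?G //; by rewrite L iota_uniq.
move=> t p; rewrite Phi_W // W_g; last by rewrite (perm_uniq p) iota_uniq.
have := g_lower t; by rewrite (perm_size p) size_iota.
Qed.
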